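(* Fix $z\in M$ and $E\in H(M)$ such that the $\mathbb R$-orbit of $z$ meets $H^{-1}(E)$ at $z_E$, and let $\tau(z,E)\in\mathbb R$ with $e^{\tau(z,E)}\cdot z_E=z$. Then \[ b(z,E)=\varphi(z)+u(2E;z),\qquad \partial_E b(z,E)=-2\tau(z,E),\qquad \partial_E^2 b(z,E)=\frac{4}{\partial_\rho^2\varphi(z_E)}. \] Hence $E\mapsto b(z,E)$ is strictly convex with minimum value $0$ attained at $E=H(z)$.
   Context: $M$ is a compact Kähler manifold with positive Hermitian holomorphic line bundle $(L,h)$; a holomorphic Hamiltonian $S^1$-action generated by $H:M\to\mathbb R$ (lifting to $L$, preserving $h$) extends to a holomorphic $\mathbb C^*$-action $z\mapsto e^{\rho+i\theta}\cdot z$, the $\mathbb R$-part $e^\rho\cdot z$ moving along the gradient of $H$. $\partial_\rho f(z)=\frac{d}{d\rho}|_{\rho=0}f(e^\rho\cdot z)$. $\varphi$ is the $S^1$-invariant local Kähler potential $\|e_L\|_h^2=e^{-\varphi}$ of a local $\mathbb C^*$-invariant holomorphic frame, so that $H=\frac12\partial_\rho\varphi$ and $\rho\mapsto\varphi(e^\rho\cdot z)$ is smooth and strictly convex. The leafwise symplectic potential is the Legendre transform $u(I;z)=\sup_{\rho\in\mathbb R}\bigl(I\rho-\varphi(e^\rho\cdot z)\bigr)$. $b(z,E)=2\int_0^{\tau(z,E)}\bigl(H(e^\sigma\cdot z_E)-E\bigr)d\sigma$. *)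

(* Defs.v *)
(* Abstraction: only the real part of the C^*-action (the gradient flow
   rho |-> e^rho . z) and the S^1-invariant local potential phi enter the
   lemma. *)
From Stdlib Require Import Reals.
From Coquelicot Require Import Coquelicot.
Open Scope R_scope.

Definition Hf {M : Type} (act : R -> M -> M) (phi : M -> R) (x : M) : R :=
  / 2 * Derive (fun r => phi (act r x)) 0.

Definition d2rho {M : Type} (act : R -> M -> M) (phi : M -> R) (x : M) : R :=
  Derive_n (fun r => phi (act r x)) 2 0.

Definition level_reached {M : Type} (act : R -> M -> M) (phi : M -> R)
  (z : M) (E : R) : Prop :=
  exists t : R, Hf act phi (act t z) = E.

Definition uleg {M : Type} (act : R -> M -> M) (phi : M -> R)
  (I : R) (x : M) : Rbar :=
  Lub_Rbar (fun y => exists rho : R, y = I * rho - phi (act rho x)).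

Definition bfun {M : Type} (act : R -> M -> M) (phi : M -> R)
  (z : M) (tau : R -> R) (E : R) : R :=
  2 * RInt (fun s => Hf act phi (act s (act (- tau E) z)) - E) 0 (tau E).

(* Main.v *)
Require Import Defs.
From Stdlib Require Import Reals Lra Ranalysis5 ssreflect.
From Coquelicot Require Import Coquelicot.
Open Scope R_scope.

Section F.
Variable f : R -> R.
Hypothesis fsm : forall n r, ex_derive_n f n r.
Hypothesis fconv : forall r, 0 < Derive_n f 2 r.

Lemma dF r : is_derive f r (Derive f r).
Proof. apply Derive_correct. exact (fsm 1 r). Qed.

Lemma dD r : is_derive (Derive f) r (Derive_n f 2 r).
Proof. have := fsm 2 r. simpl. move=> H. exact (Derive_correct _ _ H). Qed.

Lemma D_incr x y : x < y -> Derive f x < Derive f y.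
Proof.
move=> xy.
have [c [Hc Hc2]] := MVT_cor2 (Derive f) (Derive_n f 2) x y xy
  (fun c _ => proj1 (is_derive_Reals _ _ _) (dD c)).
have := fconv c. nra.
Qed.

Lemma D_le x y : x <= y -> Derive f x <= Derive f y.
Proof. case=> [h|->]; [left; apply D_incr|]; lra. Qed.

Lemma D_cont x : continuity_pt (Derive f) x.
Proof.
apply (proj2 (continuity_pt_filterlim _ _)).
apply: ex_derive_continuous. eexists. exact: dD.
Qed.

Lemma tangent x y : x <> y -> f x + Derive f x * (y - x) < f y.
Proof.
move=> nxy.
case: (Rlt_or_le x y) => h.
- have [c [Hc Hc2]] := MVT_cor2 f (Derive f) x y h
    (fun c _ => proj1 (is_derive_Reals _ _ _) (dF c)).
  have := D_incr x c (proj1 Hc2). nra.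
- have h' : y < x by lra.
  have [c [Hc Hc2]] := MVT_cor2 f (Derive f) y x h'
    (fun c _ => proj1 (is_derive_Reals _ _ _) (dF c)).
  have := D_incr c x (proj2 Hc2). nra.
Qed.

Lemma tangent_le x y : f x + Derive f x * (y - x) <= f y.
Proof.
case: (Req_dec x y) => [->|h]; [lra|left; exact: tangent].
Qed.

End F.

Section G.
Variable f : R -> R.
Hypothesis fsm : forall n r, ex_derive_n f n r.
Hypothesis fconv : forall r, 0 < Derive_n f 2 r.
Variable rho : R -> R.
Variables (E d : R).
Hypothesis dpos : 0 < d.
Hypothesis Hloc : forall E', Rabs (E' - E) < d -> Derive f (rho E') = 2 * E'.

Lemma rho_mono E1 E2 : Rabs (E1 - E) < d -> Rabs (E2 - E) < d -> E1 <= E2 -> rho E1 <= rho E2.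
Proof.
move=> h1 h2 le.
case: (Rle_or_lt (rho E1) (rho E2)) => // h.
have := D_incr f fsm fconv _ _ h. rewrite (Hloc E1 h1) (Hloc E2 h2). lra.
Qed.

Lemma rho_cont : continuity_pt rho E.
Proof.
move=> eps epos.
have hE : Rabs (E - E) < d by rewrite Rminus_diag Rabs_R0.
have HE := Hloc E hE.
set r := rho E in HE *.
have ha := D_incr f fsm fconv r (r + eps) ltac:(lra).
have hb := D_incr f fsm fconv (r - eps) r ltac:(lra).
have [a Ha] : exists a, a = Derive f (r + eps) - 2 * E by eexists.
have [b Hb] : exists b, b = 2 * E - Derive f (r - eps) by eexists.
exists (Rmin d (Rmin a b / 2)); split.
  apply Rmin_pos => //. apply Rmin_case; lra.
move=> x [_ hx]. rewrite /R_dist /= in hx *.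
have hx1 : Rabs (x - E) < d by apply: Rlt_le_trans hx (Rmin_l _ _).
have hx2 : Rabs (x - E) < Rmin a b / 2 by apply: Rlt_le_trans hx (Rmin_r _ _).
have hm1 := Rmin_l a b. have hm2 := Rmin_r a b.
have Hx := Hloc x hx1.
apply Rabs_def1.
- case: (Rlt_or_le (rho x - r) eps) => // h.
  have := D_le f fsm fconv (r + eps) (rho x) ltac:(lra).
  rewrite Hx. move/Rabs_def2: hx2; lra.
- case: (Rlt_or_le (- eps) (rho x - r)) => // h.
  have := D_le f fsm fconv (rho x) (r - eps) ltac:(lra).
  rewrite Hx. move/Rabs_def2: hx2; lra.
Qed.

Lemma rho_deriv : is_derive rho E (2 / Derive_n f 2 (rho E)).
Proof.
apply is_derive_Reals.
set F := fun r => Derive f r / 2.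
have dF2 : forall a, derivable_pt_lim F a (Derive_n f 2 a / 2).
  move=> a.
  apply is_derive_Reals. rewrite /F.
  have H := is_derive_scal _ _ (/2) _ (dD f fsm a).
  replace (Derive_n f 2 a / 2) with (/2 * Derive_n f 2 a) by field.
  apply: is_derive_ext H. move=> t. simpl. unfold Rdiv. apply Rmult_comm.
pose PrF := fun a => exist (fun l => derivable_pt_lim F a l) _ (dF2 a) : derivable_pt F a.
have hE : Rabs (E - E) < d by rewrite Rminus_diag Rabs_R0.
have Hin : forall x, E - d/2 <= x <= E + d/2 -> Rabs (x - E) < d.
  move=> x hx. apply Rabs_def1; lra.
have Hinc : rho (E - d/2) <= rho E <= rho (E + d/2).
  split; apply rho_mono => //; try apply Hin; lra.
have HD2 := fconv (rho E).
have := derivable_pt_lim_recip_interv F rho (E - d/2) (E + d/2) E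
  (fun a _ => PrF a) rho_cont ltac:(lra) ltac:(lra) Hinc.
move=> H.
replace (2 / Derive_n f 2 (rho E)) with (1 / (Derive_n f 2 (rho E) / 2)) by (field; lra).
refine (H _ _).
- move=> x hx. rewrite /comp /id /F Hloc. field. by apply Hin.
- change (Derive_n f 2 (rho E) / 2 <> 0); lra.
Qed.
End G.

Section H.
Variable f : R -> R.
Hypothesis fsm : forall n r, ex_derive_n f n r.
Hypothesis fconv : forall r, 0 < Derive_n f 2 r.

Lemma level_open r E : Derive f r = 2 * E -> exists d, 0 < d /\
  forall E', Rabs (E' - E) < d -> exists t, Derive f t = 2 * E'.
Proof.
move=> Hr.
have ha := D_incr f fsm fconv r (r + 1) ltac:(lra).
have hb := D_incr f fsm fconv (r - 1) r ltac:(lra).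
exists (Rmin (Derive f (r + 1) - 2 * E) (2 * E - Derive f (r - 1)) / 2).
split. apply Rmin_case; lra.
move=> E' hE'.
have hm1 := Rmin_l (Derive f (r + 1) - 2 * E) (2 * E - Derive f (r - 1)).
have hm2 := Rmin_r (Derive f (r + 1) - 2 * E) (2 * E - Derive f (r - 1)).
move/Rabs_def2: hE' => hE'.
have hab := D_incr f fsm fconv (r - 1) (r + 1) ltac:(lra).
have Hy : Rmin (Derive f (r - 1)) (Derive f (r + 1)) <= 2 * E' <= Rmax (Derive f (r - 1)) (Derive f (r + 1)).
  rewrite Rmin_left ?Rmax_right; lra.
case: (IVT_gen (Derive f) (r - 1) (r + 1) (2 * E') (D_cont f fsm) Hy) => x [_ Hx].
by exists x.
Qed.

Lemma closed_form tau E :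
  2 * RInt (fun s => Derive f (s + - tau) / 2 - E) 0 tau = f 0 - f (- tau) - 2 * E * tau.
Proof.
have H : is_RInt (fun s => Derive f (s + - tau) / 2 - E) 0 tau
   (minus ((fun s => f (s + - tau) / 2 - E * s) tau) ((fun s => f (s + - tau) / 2 - E * s) 0)).
  apply: (is_RInt_derive (fun s => f (s + - tau) / 2 - E * s)).
  - move=> x _. auto_derive. exact (fsm 1 (x + - tau)). change (1 * Derive f (x + - tau) * / 2 + - (E * 1) = Derive f (x + - tau) / 2 - E); rewrite /Rdiv /Rminus Rmult_1_l Rmult_1_r; reflexivity.
  - move=> x _. apply: ex_derive_continuous. auto_derive.
    exact (fsm 2 (x + - tau)).
rewrite (is_RInt_unique _ _ _ _ H) /minus /plus /opp /=.
rewrite Rplus_opp_r Rplus_0_l. field.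
Qed.

End H.

Lemma shift_n (M : Type) (act : R -> M -> M) (phi : M -> R)
  (actA : forall s t x, act s (act t x) = act (s + t) x) z t n x :
  Derive_n (fun r => phi (act r (act t z))) n x = Derive_n (fun r => phi (act r z)) n (x + t).
Proof.
rewrite -Derive_n_comp_trans. apply Derive_n_ext => y. by rewrite actA.
Qed.

Lemma Hf_shift (M : Type) (act : R -> M -> M) (phi : M -> R)
  (actA : forall s t x, act s (act t x) = act (s + t) x) z t :
  Hf act phi (act t z) = Derive (fun r => phi (act r z)) t / 2.
Proof.
rewrite /Hf. have := shift_n M act phi actA z t 1 0. simpl => ->.
rewrite Rplus_0_l. field.
Qed.

Theorem lemma2p5 (M : Type) (act : R -> M -> M) (phi : M -> R)
  (act0 : forall x, act 0 x = x)
  (actA : forall s t x, act s (act t x) = act (s + t) x)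
  (phi_smooth : forall x n r, ex_derive_n (fun r => phi (act r x)) n r)
  (phi_conv : forall x r, 0 < Derive_n (fun r => phi (act r x)) 2 r)
  (z : M) (tau : R -> R)
  (htau : forall E, level_reached act phi z E ->
            Hf act phi (act (- tau E) z) = E) :
  (forall E, level_reached act phi z E ->
     Finite (bfun act phi z tau E) = Rbar_plus (phi z) (uleg act phi (2 * E) z) /\
     is_derive (bfun act phi z tau) E (-2 * tau E) /\
     is_derive_n (bfun act phi z tau) 2 E
       (4 / d2rho act phi (act (- tau E) z))) /\
  (forall E1 E2 t, level_reached act phi z E1 -> level_reached act phi z E2 ->
     E1 <> E2 -> 0 < t < 1 ->
     bfun act phi z tau (t * E1 + (1 - t) * E2)
       < t * bfun act phi z tau E1 + (1 - t) * bfun act phi z tau E2) /\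
  bfun act phi z tau (Hf act phi z) = 0 /\
  (forall E, level_reached act phi z E -> 0 <= bfun act phi z tau E).
Proof.
have Hsh := Hf_shift M act phi actA z.
set f := fun r => phi (act r z) in Hsh *.
have fsm : forall n r, ex_derive_n f n r := phi_smooth z.
have fconv : forall r, 0 < Derive_n f 2 r := phi_conv z.
have Hb : forall E, bfun act phi z tau E = f 0 - f (- tau E) - 2 * E * tau E.
  move=> E. rewrite /bfun -(closed_form f fsm (tau E) E). f_equal.
  apply RInt_ext => s _. by rewrite actA Hsh.
have Hlev : forall E, level_reached act phi z E -> Derive f (- tau E) = 2 * E.
  move=> E HE. have := htau E HE. rewrite Hsh. lra.
have Hlev2 : forall E t, Derive f t = 2 * E -> level_reached act phi z E.
  move=> E t Ht. exists t. rewrite Hsh. lra.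
have Kle : forall E r, level_reached act phi z E ->
    2 * E * r - f r <= 2 * E * (- tau E) - f (- tau E).
  move=> E r HE. have := tangent_le f fsm fconv (- tau E) r. rewrite Hlev //. lra.
have Klt : forall E r, level_reached act phi z E -> r <> - tau E ->
    2 * E * r - f r < 2 * E * (- tau E) - f (- tau E).
  move=> E r HE hr. have := tangent f fsm fconv (- tau E) r ltac:(auto). rewrite Hlev //. lra.
have Hnb : forall E, level_reached act phi z E -> exists d, 0 < d /\
    forall E', Rabs (E' - E) < d -> level_reached act phi z E'.
  move=> E HE. have [d [dpos Hd]] := level_open f fsm fconv _ _ (Hlev E HE).
  exists d; split => // E' hE'. have [t Ht] := Hd E' hE'. exact: Hlev2 Ht.
have Htd : forall E, level_reached act phi z E ->
    is_derive tau E (- (2 / Derive_n f 2 (- tau E))).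
  move=> E HE. have [d [dpos Hd]] := Hnb E HE.
  have H := rho_deriv f fsm fconv (fun E => - tau E) E d dpos
    (fun E' h => Hlev E' (Hd E' h)).
  have H2 := is_derive_opp _ _ _ H.
  apply: (is_derive_ext _ _ _ _ _ H2) => t /=. apply: Ropp_involutive.
have Hder : forall E, level_reached act phi z E ->
    is_derive (bfun act phi z tau) E (-2 * tau E).
  move=> E HE.
  apply: (is_derive_ext (fun E => f 0 - f (- tau E) - 2 * E * tau E)).
    move=> t. by rewrite Hb.
  have H1 := Htd E HE.
  auto_derive.
    split; [exact (fsm 1%nat _)|]. split; [eexists; exact H1|]. split; [eexists; exact H1|done].
  have e1 : Derive (fun x => tau x) E = - (2 / Derive_n f 2 (- tau E)) := is_derive_unique _ _ _ H1.
  have e2 : Derive (fun x => f x) (- tau E) = 2 * E := Hlev E HE.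
  rewrite e1 e2. ring.
split.
  move=> E HE. split; [|split; [exact: Hder|]].
  - rewrite Hb /uleg (is_lub_Rbar_unique _ (Finite (2 * E * (- tau E) - f (- tau E)))).
      rewrite /= /f act0. f_equal. ring.
    split.
    + move=> y [r ->] /=. exact: Kle.
    + move=> b Hub. apply Hub. exists (- tau E). reflexivity.
  - rewrite /is_derive_n /=.
    have [d [dpos Hd]] := Hnb E HE.
    apply: (is_derive_ext_loc (fun t => -2 * tau t)).
      exists (mkposreal d dpos) => y Hy.
      have Hy' : Rabs (y - E) < d := Hy.
      symmetry. apply: is_derive_unique. exact: Hder (Hd y Hy').
    have H := is_derive_scal _ _ (-2) _ (Htd E HE).
    have Hd2 : d2rho act phi (act (- tau E) z) = Derive_n f 2 (- tau E).
      by rewrite /d2rho (shift_n M act phi actA z (- tau E) 2 0) Rplus_0_l.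
    rewrite Hd2.
    have := fconv (- tau E) => hc.
    replace (4 / Derive_n f 2 (- tau E)) with (-2 * - (2 / Derive_n f 2 (- tau E))) by (field; lra).
    exact H.
split.
  move=> E1 E2 t H1 H2 hne ht.
  set Em := t * E1 + (1 - t) * E2.
  rewrite !Hb.
  have k1 := Kle E1 (- tau Em) H1.
  have k2 := Kle E2 (- tau Em) H2.
  have hr : - tau E1 <> - tau E2.
    move=> e. have := Hlev E1 H1. rewrite e Hlev //. lra.
  have [hA|hA] : - tau Em <> - tau E1 \/ - tau Em <> - tau E2.
    case: (Req_dec (- tau Em) (- tau E1)) => e; [right; rewrite e //|by left].
  - have k3 := Klt E1 (- tau Em) H1 hA.
    have p1 : 0 < t * ((2 * E1 * - tau E1 - f (- tau E1)) - (2 * E1 * - tau Em - f (- tau Em))) by apply Rmult_lt_0_compat; lra.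
    have p2 : 0 <= (1 - t) * ((2 * E2 * - tau E2 - f (- tau E2)) - (2 * E2 * - tau Em - f (- tau Em))) by apply Rmult_le_pos; lra.
    rewrite /Em. rewrite /Em in p1 p2. lra.
  - have k3 := Klt E2 (- tau Em) H2 hA.
    have p1 : 0 <= t * ((2 * E1 * - tau E1 - f (- tau E1)) - (2 * E1 * - tau Em - f (- tau Em))) by apply Rmult_le_pos; lra.
    have p2 : 0 < (1 - t) * ((2 * E2 * - tau E2 - f (- tau E2)) - (2 * E2 * - tau Em - f (- tau Em))) by apply Rmult_lt_0_compat; lra.
    rewrite /Em. rewrite /Em in p1 p2. lra.
have HH : Hf act phi z = Derive f 0 / 2.
  have := Hsh 0. by rewrite act0.
split.
  rewrite HH.
  have HE : level_reached act phi z (Derive f 0 / 2) by exists 0; rewrite act0 HH.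
  have e := Hlev _ HE.
  have ht : - tau (Derive f 0 / 2) = 0.
    case: (Rtotal_order (- tau (Derive f 0 / 2)) 0) => [h|[h|h]] //.
    - have := D_incr f fsm fconv _ _ h. lra.
    - have := D_incr f fsm fconv _ _ h. lra.
  rewrite Hb. have -> : tau (Derive f 0 / 2) = 0 by lra.
  rewrite Ropp_0. ring.
move=> E HE. rewrite Hb.
have := tangent_le f fsm fconv (- tau E) 0. rewrite Hlev //. lra.
Qed.
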